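(* For every $d<\omega$, the graph $G_d=((2^2)^d,E_d)$, where $E_d=\{\{\sigma,\tau\}\subseteq(2^2)^d:\sigma\neq\tau \text{ and } \{\sigma,\tau\}\text{ is an up-}1\text{-comb}\}$, is a cograph.
   Context: $2^2=\{0,1\}^2$; $(2^2)^d$ is the set of sequences of length $d$ with entries in $2^2$, $(2^2)^{<d}$ those of length $<d$, $\tau^\frown a$ concatenation. For $A,B\subseteq(2^2)^d$, $A$ is narrowly below $B$ if there are $\tau\in(2^2)^{<d}$, $i<2$ with every element of $A$ extending $\tau^\frown(i,0)$ and every element of $B$ extending $\tau^\frown(i,1)$. The up-$1$-combs form the smallest class of finite subsets of $(2^2)^d$ containing singletons and containing $A\cup B$ whenever $A,B$ are in it, $|A|\le1$ and $A$ is narrowly below $B$. For graphs $G_0=(V_0,E_0)$, $G_1=(V_1,E_1)$ on disjoint vertex sets, the coproduct is $(V_0\cup V_1,E_0\cup E_1)$ and the graph join is $(V_0\cup V_1,E_0\cup E_1\cup\{\{a,b\}:a\in V_0,b\in V_1\})$. Cographs form the smallest class of graphs containing the one-vertex graph and closed (up to isomorphism) under coproducts and graph joins. *)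

(* Defs.v *)
From mathcomp Require Import all_boot.
Set Implicit Arguments. Unset Strict Implicit. Unset Printing Implicit Defensive.

(* 2^2 is encoded as bool * bool (0 = false, 1 = true);
   (2^2)^d is d.-tuple (bool * bool). *)
Definition vtx (d : nat) : finType := (d.-tuple (bool * bool))%type.

Definition narrowly_below (d : nat) (A B : {set vtx d}) : Prop :=
  exists (tau : seq (bool * bool)) (i : bool),
    [/\ size tau < d,
        (forall s, s \in A -> prefix (rcons tau (i, false)) (tval s)) &
        (forall s, s \in B -> prefix (rcons tau (i, true)) (tval s))].

Inductive up1comb (d : nat) : {set vtx d} -> Prop :=
  | up1comb_single : forall s, up1comb [set s]
  | up1comb_union : forall A B, up1comb A -> up1comb B ->
      #|A| <= 1 -> narrowly_below A B -> up1comb (A :|: B).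

Definition coproduct_rel (V0 V1 : Type) (E0 : V0 -> V0 -> Prop)
  (E1 : V1 -> V1 -> Prop) (x y : V0 + V1) : Prop :=
  match x, y with
  | inl a, inl b => E0 a b
  | inr a, inr b => E1 a b
  | _, _ => False
  end.

Definition join_rel (V0 V1 : Type) (E0 : V0 -> V0 -> Prop)
  (E1 : V1 -> V1 -> Prop) (x y : V0 + V1) : Prop :=
  match x, y with
  | inl a, inl b => E0 a b
  | inr a, inr b => E1 a b
  | _, _ => True
  end.

Inductive cograph : forall V : Type, (V -> V -> Prop) -> Prop :=
  | cograph_one : cograph (fun _ _ : unit => False)
  | cograph_coprod : forall (V0 V1 : Type) (E0 : V0 -> V0 -> Prop)
      (E1 : V1 -> V1 -> Prop), cograph E0 -> cograph E1 ->
      cograph (coproduct_rel E0 E1)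
  | cograph_join : forall (V0 V1 : Type) (E0 : V0 -> V0 -> Prop)
      (E1 : V1 -> V1 -> Prop), cograph E0 -> cograph E1 ->
      cograph (join_rel E0 E1)
  | cograph_iso : forall (V V' : Type) (E : V -> V -> Prop)
      (E' : V' -> V' -> Prop) (f : V -> V'), bijective f ->
      (forall x y, E x y <-> E' (f x) (f y)) ->
      cograph E -> cograph E'.

Definition Gd_edge (d : nat) (s t : vtx d) : Prop :=
  s <> t /\ up1comb [set s; t].

(* Main.v *)
Require Import Defs.
From mathcomp Require Import all_boot.
Set Implicit Arguments. Unset Strict Implicit. Unset Printing Implicit Defensive.

Definition P (s t : seq (bool * bool)) : Prop :=
  exists (tau : seq (bool * bool)) (i : bool),
    prefix (rcons tau (i, false)) s /\ prefix (rcons tau (i, true)) t.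

Definition Ed s t := P s t \/ P t s.

Lemma P_cons a b s t :
  P (a :: s) (b :: t) <-> (a = b /\ P s t) \/ (a.1 = b.1 /\ a.2 = false /\ b.2 = true).
Proof.
split.
- case=> [[|c tau] [i [H1 H2]]].
  + move: H1 H2; rewrite [rcons _ _]/= [rcons _ _]/= !prefix_cons => /andP[/eqP <- _] /andP[/eqP <- _].
    by right.
  + move: H1 H2; rewrite [rcons _ _]/= [rcons _ _]/= !prefix_cons => /andP[/eqP <- H1] /andP[/eqP <- H2].
    by left; split => //; exists tau, i.
- case=> [[<- [tau [i [H1 H2]]]]|[E1 [E2 E3]]].
  + by exists (a :: tau), i; rewrite [rcons _ _]/= [rcons _ _]/= !prefix_cons eqxx H1 H2.
  + exists [::], a.1; case: a b E1 E2 E3 => x y [x' y'] /= <- -> ->.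
    by rewrite /= !eqxx !prefix0s.
Qed.

Lemma Ed_cons a b s t :
  Ed (a :: s) (b :: t) <-> (a = b /\ Ed s t) \/ (a.1 = b.1 /\ a.2 <> b.2).
Proof.
rewrite /Ed; split.
- case=> [/P_cons [[-> H]|[E1 [E2 E3]]]|/P_cons [[-> H]|[E1 [E2 E3]]]];
    try by left; split; auto.
  + by right; split => //; rewrite E2 E3.
  + by right; split => //; rewrite E2 E3.
- case=> [[-> [H|H]]|[E1 E2]].
  + by left; apply/P_cons; left.
  + by right; apply/P_cons; left.
  + case: a b E1 E2 => x [] [x' []] //= -> _.
    * by right; apply/P_cons; right.
    * by left; apply/P_cons; right.
Qed.

Lemma P_neq s t : P s t -> s <> t.
Proof.
case=> tau [i [/prefixP [s' ->] /prefixP [t' ->]]] E.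
move: (f_equal (nth (i, true) ^~ (size tau)) E).
by rewrite !nth_cat !size_rcons ltnSn !nth_rcons ltnn eqxx.
Qed.

Lemma comb_Ed d (C : {set vtx d}) : up1comb C ->
  forall s t, s \in C -> t \in C -> s <> t -> Ed (tval s) (tval t).
Proof.
elim=> [x|A B _ IHA _ IHB HA [tau [i [_ HpA HpB]]]] s t.
- by rewrite !inE => /eqP -> /eqP ->.
- rewrite !inE => /orP[sA|sB] /orP[tA|tB] st.
  + by case: st; move/card_le1_eqP: HA; apply.
  + by left; exists tau, i; split; auto.
  + by right; exists tau, i; split; auto.
  + by apply: IHB.
Qed.

Lemma edge_Ed d (s t : vtx d) : Gd_edge s t <-> Ed (tval s) (tval t).
Proof.
split.
- case=> st H; apply: (comb_Ed H) => //; rewrite !inE eqxx ?orbT //.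
- move=> H; split.
  + move=> E; case: H; move/P_neq; apply; by rewrite E.
  + have Hsz : forall (tau : seq (bool*bool)) x (u : vtx d), prefix (rcons tau x) (tval u) -> size tau < d.
      move=> tau x u /prefixP [w] /(f_equal size); rewrite size_cat size_rcons size_tuple => ->.
      by rewrite addSn ltnS leq_addr.
    case: H => [[tau [i [H1 H2]]]|[tau [i [H1 H2]]]].
    *
      apply: up1comb_union; try apply: up1comb_single; first by rewrite cards1.
      exists tau, i; split; first exact: Hsz H1.
      - by move=> u; rewrite inE => /eqP ->.
      - by move=> u; rewrite inE => /eqP ->.
    * have -> : [set s; t] = [set t] :|: [set s] by rewrite setUC.
      apply: up1comb_union; try apply: up1comb_single; first by rewrite cards1.
      exists tau, i; split; first exact: Hsz H1.
      - by move=> u; rewrite inE => /eqP ->.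
      - by move=> u; rewrite inE => /eqP ->.
Qed.

Section Step.
Variable d : nat.
Let V := vtx d.
Definition bigT := ((V + V) + (V + V))%type.

Definition fstep (x : bigT) : vtx d.+1 :=
  match x with
  | inl (inl s) => [tuple of (false, false) :: tval s]
  | inl (inr s) => [tuple of (false, true) :: tval s]
  | inr (inl s) => [tuple of (true, false) :: tval s]
  | inr (inr s) => [tuple of (true, true) :: tval s]
  end.

Definition gstep (t : vtx d.+1) : bigT :=
  let r := [tuple of behead t] in
  match thead t with
  | (false, false) => inl (inl r)
  | (false, true) => inl (inr r)
  | (true, false) => inr (inl r)
  | (true, true) => inr (inr r)
  end.

Lemma fstep_bij : bijective fstep.
Proof.
exists gstep.
- by case=> [[]|[]] s; rewrite /gstep /=; do 2 f_equal; apply: val_inj.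
- move=> t; rewrite [t in RHS]tuple_eta /gstep.
  by case: (thead t) => [[] []]; apply: val_inj.
Qed.

End Step.

Theorem lemma4p3 : forall d : nat, cograph (@Gd_edge d).
Proof.
elim=> [|d IH].
- apply: (@cograph_iso unit (vtx 0) (fun _ _ => False) _ (fun _ => [tuple])); last exact: cograph_one.
  + by exists (fun _ => tt); [case | move=> t; rewrite (tuple0 t)].
  + by move=> x y; split => // [[]].
- have J := cograph_join IH IH.
  apply: (cograph_iso (fstep_bij d)); last exact (cograph_coprod J J).
  move=> x y; apply: (iff_trans _ (iff_sym (edge_Ed _ _))).
  case: x => [[]|[]] s; case: y => [[]|[]] t /=;
  (apply: (iff_trans _ (iff_sym (Ed_cons _ _ _ _))); rewrite /=).
  all: have E := edge_Ed s t; split; [ intros H; first [ exact I | by case: H | by left; split; [reflexivity | apply E] | by right ] | case=> [[Ea Eb]|[Ea Eb]]; first [exact I | by apply E | discriminate | by case: Eb | by [] ] ].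
Qed.
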